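(* Let $K$ be a field of characteristic zero, $x=(x_1,\dots,x_n)$, and let $G\in K[x]^n$ be a Keller map such that $\mathcal{J}G$ is symmetric. Let $i$ be an index such that $\frac{\partial}{\partial x_i}G_i^{(1)}\neq 0$, where $G_i^{(1)}$ is the homogeneous part of degree $1$ of $G_i$. If $G_i=G_i^{(1)}+\big(G_i^{(1)}\big)^2h+c$ for some $c\in K$ and $h\in K[x]$, then $h=0$, and hence $\deg G_i=1$.
   Context: A Keller map is a polynomial map $G\in K[x]^n$ with $\det\mathcal{J}G\in K^{*}$, $\mathcal{J}$ the Jacobian matrix. *)

(* Defs.v *)
From HB Require Import structures.
From mathcomp Require Import all_boot all_order all_algebra.
From mathcomp Require Import mpoly.
Set Implicit Arguments. Unset Strict Implicit. Unset Printing Implicit Defensive.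
Import GRing.Theory.
Local Open Scope ring_scope.

Definition homog_part (n : nat) (K : nzRingType) (d : nat) (p : {mpoly K[n]})
  : {mpoly K[n]} :=
  \sum_(m <- msupp p | mdeg m == d) p@_m *: 'X_[m].

(* Total degree (0 for the zero polynomial); msize p = 1 + total degree. *)
Definition mtotdeg (n : nat) (K : nzRingType) (p : {mpoly K[n]}) : nat :=
  (msize p).-1.

Definition jacobian (n : nat) (K : nzRingType) (G : 'I_n -> {mpoly K[n]})
  : 'M[{mpoly K[n]}]_n :=
  \matrix_(i < n, j < n) mderiv j (G i).

Definition keller (n : nat) (K : fieldType) (G : 'I_n -> {mpoly K[n]}) : Prop :=
  exists c : K, c != 0 /\ \det (jacobian G) = c%:MP.

(* Main.v *)
Require Import Defs.
From HB Require Import structures.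
From mathcomp Require Import all_boot all_order all_algebra.
From mathcomp Require Import mpoly.
From mathcomp Require Import ring zify perm.
Set Implicit Arguments. Unset Strict Implicit. Unset Printing Implicit Defensive.
Import GRing.Theory.
Local Open Scope ring_scope.

Section Aux.
Variables (K : fieldType) (n : nat).
Implicit Types (p q : {mpoly K[n]}).

Lemma homog1_deriv_const p (j : 'I_n) :
  exists a : K, mderiv j (homog_part 1 p) = a%:MP.
Proof.
rewrite /homog_part raddf_sum /=.
apply: (big_ind (fun x => exists a : K, x = a%:MP)).
- by exists 0; rewrite mpolyC0.
- by move=> x y [a ->] [b ->]; exists (a + b); rewrite mpolyCD.
move=> m /mdeg1P [k /eqP ->].
rewrite mderivZ mderivX mnm1E.
case: eqP => [->|_].
  have -> : (U_(j) - U_(j) = 0)%MM by rewrite -[X in (X - _)%MM]add0m addmK.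
  exists (p@_U_(j)); by rewrite mpolyX0 scale1r -alg_mpolyC.
by exists 0; rewrite scale0r scaler0 mpolyC0.
Qed.
End Aux.
Section Aux.
Variables (K : fieldType) (n : nat).
Implicit Types (p q : {mpoly K[n]}).

Lemma mderiv_prod j (I : eqType) (r : seq I) (F : I -> {mpoly K[n]}) : uniq r ->
  mderiv j (\prod_(i <- r) F i) = \sum_(l <- r) mderiv j (F l) * \prod_(i <- r | i != l) F i.
Proof.
elim: r => [|x r IH] /=.
  by rewrite !big_nil -mpolyC1 mderivC.
case/andP => xr ur.
rewrite big_cons mderivM IH // big_cons big_cons eqxx /=.
have -> : \prod_(i <- r | i != x) F i = \prod_(i <- r) F i.
  rewrite big_seq_cond [RHS]big_seq_cond; apply: eq_bigl => i.
  by case ir: (i \in r) => //=; case: eqP => // eix; rewrite -eix ir in xr.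
congr (_ + _); rewrite mulr_sumr; apply: eq_big_seq => l lr.
rewrite big_cons; case: eqP => [exl|_]; last by rewrite mulrCA.
by rewrite exl lr in xr.
Qed.
End Aux.
Section Aux.
Variables (K : fieldType) (n : nat).

Lemma mderiv_sign j (s : 'S_n) : mderiv j ((-1) ^+ s : {mpoly K[n]}) = 0.
Proof. by case: (odd_perm s); rewrite ?expr1 ?expr0 ?mderivN -mpolyC1 mderivC ?oppr0. Qed.

Lemma mderiv_prod_ord j (F : 'I_n -> {mpoly K[n]}) :
  mderiv j (\prod_i F i) = \sum_l mderiv j (F l) * \prod_(i | i != l) F i.
Proof. by rewrite mderiv_prod // index_enum_uniq. Qed.

Lemma mderiv_det j (A : 'M[{mpoly K[n]}]_n) :
  mderiv j (\det A) = \sum_(k < n) \sum_(l < n) mderiv j (A k l) * cofactor A k l.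
Proof.
rewrite /determinant raddf_sum /=.
under eq_bigr => s _ do rewrite mderivM mderiv_sign mul0r add0r.
under eq_bigr => s _ do rewrite mderiv_prod_ord mulr_sumr.
rewrite exchange_big /=; apply: eq_bigr => k _.
pose B := \matrix_(i, l) (if i == k then mderiv j (A k l) else A i l).
have cofB l : cofactor B k l = cofactor A k l.
  rewrite /cofactor; congr (_ * \det _); apply/matrixP => a b; rewrite !mxE.
  by rewrite eq_sym (negbTE (neq_lift _ _)).
transitivity (\det B); last first.
  by rewrite (expand_det_row B k); apply: eq_bigr => l _; rewrite cofB mxE eqxx.
rewrite /determinant; apply: eq_bigr => s _.
rewrite [in RHS](bigD1 k) //= /B mxE eqxx !mulrA; congr (_ * _).
by apply: eq_bigr => i ik; rewrite mxE (negbTE ik).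
Qed.
End Aux.
Section Aux.
Variables (K : fieldType) (n : nat).
Local Notation R := {mpoly K[n]}.

Lemma mderiv_nat j k : mderiv j (k%:R : R) = 0.
Proof. by rewrite -mpolyC_nat mderivC. Qed.

Lemma mderiv_pow j (L : R) k : mderiv j (L ^+ k.+1) = k.+1%:R * L ^+ k * mderiv j L.
Proof.
elim: k => [|k IH]; first by rewrite expr1 expr0 mulr1 mul1r.
rewrite exprS mderivM IH exprS -[k.+2]addn1 natrD; ring.
Qed.

Lemma sum2_lin3 (f1 f2 f3 : 'I_n -> 'I_n -> R) (X Y Z : R) :
  \sum_l \sum_k (X * f1 l k + Y * f2 l k + Z * f3 l k) =
  X * (\sum_l \sum_k f1 l k) + Y * (\sum_l \sum_k f2 l k) + Z * (\sum_l \sum_k f3 l k).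
Proof.
rewrite !mulr_sumr -!big_split; apply: eq_bigr => l _.
by rewrite !mulr_sumr -!big_split.
Qed.

Lemma descent (L g Gi : R) (C : 'I_n -> 'I_n -> R) (a : 'I_n -> K) (i : 'I_n)
    (d c : K) (m : nat) :
  [pchar K] =i pred0 -> (forall j, mderiv j L = (a j)%:MP) -> a i != 0 -> d != 0 ->
  L != 0 ->
  (\sum_l (a l)%:MP * \sum_k mderiv k Gi * C l k = (a i)%:MP * d%:MP) ->
  (\sum_k \sum_l mderiv l (mderiv k Gi) * C k l = 0) ->
  Gi = L + L ^+ m.+2 * g + c%:MP ->
  exists g', g = L * g'.
Proof.
move=> pc hL ai0 d0 L0 e1 e2 eG.
set P := L ^+ m.
have dE k : mderiv k Gi = (a k)%:MP + (m.+2%:R * (L * P) * (a k)%:MP) * g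
                          + L * (L * P) * mderiv k g.
  rewrite eG !mderivD mderivC mderivM mderiv_pow hL /P !exprS; ring.
have d2 l k : mderiv l (mderiv k Gi) =
   (m.+2%:R * m.+1%:R * P * g) * ((a l)%:MP * (a k)%:MP)
   + (m.+2%:R * L * P) * ((a k)%:MP * mderiv l g + (a l)%:MP * mderiv k g)
   + L * (L * P) * mderiv l (mderiv k g).
  rewrite dE !mderivD mderivC !mderivM !mderiv_nat mderivC.
  have LdP : L * mderiv l P = m%:R * P * (a l)%:MP.
    rewrite /P; case: (m) => [|m']; first by rewrite expr0 -mpolyC1 mderivC mulr0 mul0r mul0r.
    by rewrite mderiv_pow hL exprS; ring.
  rewrite LdP hL; ring.
pose f1 x y := (a x)%:MP * (a y)%:MP * C x y.
pose fR x y := (a x)%:MP * mderiv y g * C x y.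
pose fT x y := ((a x)%:MP * mderiv y g + (a y)%:MP * mderiv x g) * C x y.
pose fS x y := mderiv y (mderiv x g) * C x y.
have E1 : (a i)%:MP * d%:MP = 1 * (\sum_l \sum_k f1 l k)
      + (m.+2%:R * (L * P) * g) * (\sum_l \sum_k f1 l k)
      + (L * (L * P)) * (\sum_l \sum_k fR l k).
  rewrite -sum2_lin3 -e1; apply: eq_bigr => l _; rewrite mulr_sumr.
  apply: eq_bigr => k _; rewrite dE /f1 /fR; ring.
have E2 : 0 = (m.+2%:R * m.+1%:R * P * g) * (\sum_l \sum_k f1 l k)
      + (m.+2%:R * L * P) * (\sum_l \sum_k fT l k)
      + (L * (L * P)) * (\sum_l \sum_k fS l k).
  rewrite -sum2_lin3 -[in LHS]e2; apply: eq_bigr => k _; apply: eq_bigr => l _.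
  rewrite d2 /f1 /fT /fS; ring.
set Q := \sum_l \sum_k f1 l k in E1 E2.
set R1 := \sum_l \sum_k fR l k in E1.
set T := \sum_l \sum_k fT l k in E2.
set S := \sum_l \sum_k fS l k in E2.
have P0 : P != 0 by rewrite /P expf_neq0.
have E2' : m.+2%:R * m.+1%:R * g * Q = - (m.+2%:R * L * T + L * L * S).
  apply/eqP; rewrite -subr_eq0 opprK; apply/eqP.
  apply: (mulIf P0); rewrite mul0r E2; ring.
pose kap : K := m.+2%:R * m.+1%:R * a i * d.
have kap0 : kap != 0.
  rewrite /kap !mulf_neq0 //.
    by rewrite ((pcharf0P _).1 pc).
  by rewrite ((pcharf0P _).1 pc).
have key : g * kap%:MP = L * (m.+2%:R * m.+1%:R * g * (m.+2%:R * P * g * Q + L * P * R1)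
                           - m.+2%:R * T - L * S).
  have -> : kap%:MP = m.+2%:R * m.+1%:R * ((a i)%:MP * d%:MP) :> R.
    by rewrite /kap !mpolyCM !mpolyC_nat mulrA.
  rewrite E1.
  transitivity (m.+2%:R * m.+1%:R * g * Q
      + L * (m.+2%:R * m.+1%:R * g * (m.+2%:R * P * g * Q + L * P * R1))); first ring.
  rewrite E2'; ring.
exists ((m.+2%:R * m.+1%:R * g * (m.+2%:R * P * g * Q + L * P * R1)
                           - m.+2%:R * T - L * S) * (kap^-1)%:MP).
rewrite mulrA -key -mulrA -mpolyCM divff // mpolyC1 mulr1 //.
Qed.
End Aux.
Section Aux.
Variables (K : fieldType) (n : nat).
Local Notation R := {mpoly K[n]}.

Lemma homog1_supp (p : R) m : m \in msupp (homog_part 1 p) -> mdeg m = 1%N.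
Proof.
move/msupp_sum_le; case/flattenP => s /mapP [m'].
rewrite mem_filter => /andP [hm' _] -> hs.
by move/msuppZ_le: hs; rewrite msuppX inE => /eqP ->; apply/eqP.
Qed.

Lemma msize_pos (p : R) : p != 0 -> (0 < msize p)%N.
Proof. by move/mlead_deg <-. Qed.

Lemma msize_nonconst (L : R) i : mderiv i L != 0 -> (1 < msize L)%N.
Proof.
move=> h; rewrite ltnNge; apply/negP => /msize1_polyC e.
by move: h; rewrite e mderivC eqxx.
Qed.

Lemma msize_pow (L : R) m : (1 < msize L)%N -> (m < msize (L ^+ m))%N.
Proof.
move=> h; have L0 : L != 0 by apply/eqP => e; rewrite e msize0 in h.
elim: m => [|m IH]; first by rewrite expr0 msize1.
rewrite exprS msizeM ?expf_neq0 //.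
move: h IH; rewrite -subn1; move: (msize L) (msize (L ^+ m)) => a b ha hb; lia.
Qed.
End Aux.

Theorem corollary7p2 (K : fieldType) (n : nat) (G : 'I_n -> {mpoly K[n]})
  (i : 'I_n) (h : {mpoly K[n]}) (c : K) :
  [pchar K] =i pred0 ->
  keller G ->
  (jacobian G)^T = jacobian G ->
  mderiv i (homog_part 1 (G i)) != 0 ->
  G i = homog_part 1 (G i) + (homog_part 1 (G i)) ^+ 2 * h + c%:MP ->
  h = 0 /\ mtotdeg (G i) = 1%N.
Proof.
move=> pc [d [d0 hdet]] sym hi eqG.
have hLc := homog1_deriv_const (G i).
have hLs := @homog1_supp K n (G i).
set L := homog_part 1 (G i) in hLc hLs hi eqG *.
have [a ha] : exists a : 'I_n -> K, forall j, mderiv j L = (a j)%:MP.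
  have hLc' j : exists x : K, mderiv j L == x%:MP.
    by have [x ->] := hLc j; exists x.
  by exists (fun j => xchoose (hLc' j)) => j; apply/eqP; apply: (xchooseP (hLc' j)).
have ai0 : a i != 0 by rewrite -(mpolyC_eq0 n) -ha.
have L0 : L != 0 by apply/eqP => e; move: hi; rewrite e mderiv0 eqxx.
clearbody L.
set J := jacobian G.
have S k l : mderiv l (G k) = mderiv k (G l).
  by have := sym; move/matrixP/(_ k l); rewrite !mxE => ->.
have A1 : \sum_l (a l)%:MP * \sum_k mderiv k (G i) * cofactor J l k = (a i)%:MP * d%:MP.
  have e l : \sum_k mderiv k (G i) * cofactor J l k = (J *m \adj J) i l.
    by rewrite mxE; apply: eq_bigr => k _; rewrite !mxE.
  transitivity (\sum_l (a l)%:MP * (J *m \adj J) i l); first by apply: eq_bigr => l _; rewrite e.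
  rewrite mul_mx_adj hdet (bigD1 i) //= big1 ?addr0; first by rewrite !mxE eqxx mulr1n.
  by move=> l li; rewrite !mxE eq_sym (negbTE li) mulr0n mulr0.
have A2 : \sum_k \sum_l mderiv l (mderiv k (G i)) * cofactor J k l = 0.
  transitivity (mderiv i (\det J)); last by rewrite hdet mderivC.
  rewrite mderiv_det; apply: eq_bigr => k _; apply: eq_bigr => l _; congr (_ * _).
  by rewrite mxE (mderiv_comm l i (G k)) (S k i).
have it : forall m, exists g, G i = L + L ^+ m.+2 * g + c%:MP.
  elim => [|m [g eg]]; first by exists h.
  have [g' eg'] := descent pc ha ai0 d0 L0 A1 A2 eg.
  by exists g'; rewrite eg eg' mulrA -exprSr.
have hz : h = 0.
  have [g eg] := it (msize h).
  move: eg; rewrite {1}eqG => /addIr /addrI.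
  rewrite -[(msize h).+2]addn2 exprD => e0.
  have eh : h = L ^+ msize h * g.
    by apply: (mulfI (expf_neq0 2 L0)); rewrite e0 -mulrA mulrCA.
  apply/eqP; apply/negP => /negP h0.
  have g0 : g != 0 by apply/eqP => e; move: h0; rewrite eh e mulr0 eqxx.
  have hL := msize_pow (msize h) (msize_nonconst hi).
  have := msizeM (expf_neq0 (msize h) L0) g0; rewrite -eh => e.
  have := msize_pos g0 => hg.
  move: hL hg e; move: (msize h) (msize (L ^+ msize h)) (msize g) => x y z; lia.
split => //.
rewrite /mtotdeg eqG hz mulr0 addr0.
set P := L + c%:MP.
have hP : mderiv i P != 0 by rewrite /P mderivD mderivC addr0.
have lo := msize_nonconst hP.
have P0 : P != 0 by apply/eqP => e; rewrite e msize0 in lo.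
suff up : (msize P <= 2)%N by move: lo up; move: (msize P) => x; lia.
rewrite -(mlead_deg P0) ltnS.
have := msuppD_le (mlead_supp P0); rewrite mem_cat => /orP [/hLs -> //|].
rewrite msuppC; case: eqP => // _; rewrite inE => /eqP ->; by rewrite mdeg0.
Qed.
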